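(* Let $\{\mathcal{G}_k\}_{k\ge0}$ be any sequence of digraphs on $\mathcal{V}=\{1,\dots,n\}$, $n\ge3$. Consider any algorithm in $\mathcal{A}_{\rm ave}$ whose parameters satisfy $\sum_{k=0}^\infty(1-\eta_k)<\infty$. Then for every initial time $k_0\ge0$ and every initial value $x^0\in\mathbb{R}^n$ not on the consensus manifold $\mathrm{C}=\{x: x_1=\dots=x_n\}$, asymptotic consensus is not achieved; in fact $\liminf_{K\to\infty}\big(\max_i x_i(K)-\min_i x_i(K)\big)>0$.
   Context: Network of nodes $\mathcal{V}=\{1,\dots,n\}$, discrete time, states $x_i(k)\in\mathbb{R}$. At each time $k$ a digraph $\mathcal{G}_k=(\mathcal{V},\mathcal{E}_k)$ is given; $j$ is a neighbor of $i$ at time $k$ if $(j,i)\in\mathcal{E}_k$, every node is always its own neighbor; $\mathcal{N}_i(k)$ is the neighbor set. The algorithm is $$x_i(k+1)=\eta_k x_i(k)+\alpha_k\min_{j\in\mathcal{N}_i(k)}x_j(k)+(1-\eta_k-\alpha_k)\max_{j\in\mathcal{N}_i(k)}x_j(k),$$ with given node-independent parameter sequences. The class $\mathcal{A}_{\rm ave}$ consists of those algorithms with $\eta_k\in(0,1]$, $\alpha_k\in[0,1-\eta_k]$ for all $k$. The iteration starts at time $k_0$ with $x(k_0)=x^0$. Asymptotic consensus for $x^0$ means there is $z_*\in\mathbb{R}$ with $\lim_{k\to\infty}x_i(k)=z_*$ for all $i$. *)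

(* Defs.v *)
(* real numbers. Nodes are 0..n-1 (paper: 1..n). *)
From Stdlib Require Import Reals Lra Lia List.
Import ListNotations.
Open Scope R_scope.

(* A time-varying digraph: E k j i = true iff (j,i) is an edge of G_k,
   i.e. j is a neighbor of i at time k. *)
Definition graph_seq := nat -> nat -> nat -> bool.

Definition nbrs (n : nat) (E : graph_seq) (k i : nat) : list nat :=
  filter (fun j => E k j i) (seq 0 n).

(* Since i is always
   its own neighbor (standing assumption, hypothesis in the theorem), starting
   the fold at x i gives exactly the min/max over N_i(k). *)
Definition nbr_min (n : nat) (E : graph_seq) (k i : nat) (x : nat -> R) : R :=
  fold_right Rmin (x i) (map x (nbrs n E k i)).
Definition nbr_max (n : nat) (E : graph_seq) (k i : nat) (x : nat -> R) : R :=
  fold_right Rmax (x i) (map x (nbrs n E k i)).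

Definition step (n : nat) (E : graph_seq) (eta alpha : nat -> R) (k : nat)
  (x : nat -> R) : nat -> R :=
  fun i => eta k * x i + alpha k * nbr_min n E k i x
           + (1 - eta k - alpha k) * nbr_max n E k i x.

Fixpoint traj (n : nat) (E : graph_seq) (eta alpha : nat -> R) (k0 : nat)
  (x0 : nat -> R) (m : nat) : nat -> R :=
  match m with
  | O => x0
  | S m' => step n E eta alpha (k0 + m') (traj n E eta alpha k0 x0 m')
  end.

Definition state (n : nat) (E : graph_seq) (eta alpha : nat -> R) (k0 : nat)
  (x0 : nat -> R) (K : nat) : nat -> R :=
  traj n E eta alpha k0 x0 (K - k0)%nat.

Definition spread (n : nat) (x : nat -> R) : R :=
  fold_right Rmax (x 0%nat) (map x (seq 0 n))
  - fold_right Rmin (x 0%nat) (map x (seq 0 n)).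

(* Main.v *)
Require Import Defs.
From Stdlib Require Import Reals Lra Lia List.
Open Scope R_scope.

Lemma fmax_init a l : a <= fold_right Rmax a l.
Proof. induction l; simpl. lra. eapply Rle_trans; [exact IHl| apply Rmax_r]. Qed.
Lemma fmax_in a l v : In v l -> v <= fold_right Rmax a l.
Proof. induction l; simpl. tauto. intros [<-|H]. apply Rmax_l.
 eapply Rle_trans; [exact (IHl H)| apply Rmax_r]. Qed.
Lemma fmax_le a l B : a <= B -> (forall v, In v l -> v <= B) -> fold_right Rmax a l <= B.
Proof. intros Ha H; induction l; simpl. lra. apply Rmax_lub. apply H; simpl; auto.
 apply IHl; intros; apply H; simpl; auto. Qed.
Lemma fmax_att a l : fold_right Rmax a l = a \/ In (fold_right Rmax a l) l.
Proof. induction l; simpl. auto. destruct (Rle_dec a0 (fold_right Rmax a l)).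
 rewrite Rmax_right by auto. destruct IHl as [H|H]; auto.
 rewrite Rmax_left by lra. auto. Qed.
Lemma fmin_init a l : fold_right Rmin a l <= a.
Proof. induction l; simpl. lra. eapply Rle_trans; [apply Rmin_r| exact IHl]. Qed.
Lemma fmin_in a l v : In v l -> fold_right Rmin a l <= v.
Proof. induction l; simpl. tauto. intros [<-|H]. apply Rmin_l.
 eapply Rle_trans; [apply Rmin_r|exact (IHl H)]. Qed.
Lemma fmin_ge a l B : B <= a -> (forall v, In v l -> B <= v) -> B <= fold_right Rmin a l.
Proof. intros Ha H; induction l; simpl. lra. apply Rmin_glb. apply H; simpl; auto.
 apply IHl; intros; apply H; simpl; auto. Qed.
Lemma fmin_att a l : fold_right Rmin a l = a \/ In (fold_right Rmin a l) l.
Proof. induction l; simpl. auto. destruct (Rle_dec a0 (fold_right Rmin a l)).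
 rewrite Rmin_left by auto. auto.
 rewrite Rmin_right by lra. destruct IHl as [H|H]; auto. Qed.

Definition Mx n (x : nat -> R) := fold_right Rmax (x 0%nat) (map x (seq 0 n)).
Definition Mn n (x : nat -> R) := fold_right Rmin (x 0%nat) (map x (seq 0 n)).

Lemma Mx_ge n x i : (i < n)%nat -> x i <= Mx n x.
Proof. intro; apply fmax_in, in_map, in_seq; lia. Qed.
Lemma Mn_le n x i : (i < n)%nat -> Mn n x <= x i.
Proof. intro; apply fmin_in, in_map, in_seq; lia. Qed.
Lemma Mx_att n x : (1 <= n)%nat -> exists i, (i < n)%nat /\ x i = Mx n x.
Proof. intro Hn1. destruct (fmax_att (x 0%nat) (map x (seq 0 n))) as [H|H].
 exists 0%nat; split; [lia|]; unfold Mx; rewrite H; auto.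
 apply in_map_iff in H. destruct H as [j [Hj Hin]]. apply in_seq in Hin.
 exists j; split; [lia|auto]. Qed.
Lemma Mn_att n x : (1 <= n)%nat -> exists i, (i < n)%nat /\ x i = Mn n x.
Proof. intro Hn1. destruct (fmin_att (x 0%nat) (map x (seq 0 n))) as [H|H].
 exists 0%nat; split; [lia|]; unfold Mn; rewrite H; auto.
 apply in_map_iff in H. destruct H as [j [Hj Hin]]. apply in_seq in Hin.
 exists j; split; [lia|auto]. Qed.

Lemma nbr_lt n E k i j : In j (nbrs n E k i) -> (j < n)%nat.
Proof. unfold nbrs. intro H. apply filter_In in H. destruct H as [H _]. apply in_seq in H; lia. Qed.

Lemma step_spread n E eta alpha k x : (1 <= n)%nat -> 0 < eta k ->
  0 <= alpha k <= 1 - eta k ->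
  spread n (step n E eta alpha k x) >= eta k * spread n x.
Proof.
  intros Hn He Ha. unfold spread. fold (Mx n (step n E eta alpha k x)).
  fold (Mn n (step n E eta alpha k x)). fold (Mx n x). fold (Mn n x).
  destruct (Mx_att n x Hn) as [a [Ha' HA]]. destruct (Mn_att n x Hn) as [b [Hb' HB]].
  assert (H1 : x a <= nbr_max n E k a x) by apply fmax_init.
  assert (H2 : Mn n x <= nbr_min n E k a x).
  { apply fmin_ge. apply Mn_le; auto. intros v Hv. apply in_map_iff in Hv.
    destruct Hv as [j [<- Hj]]. apply Mn_le. eapply nbr_lt; eauto. }
  assert (H3 : nbr_min n E k b x <= x b) by apply fmin_init.
  assert (H4 : nbr_max n E k b x <= Mx n x).
  { apply fmax_le. apply Mx_ge; auto. intros v Hv. apply in_map_iff in Hv.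
    destruct Hv as [j [<- Hj]]. apply Mx_ge. eapply nbr_lt; eauto. }
  assert (Ya := Mx_ge n (step n E eta alpha k x) a Ha').
  assert (Yb := Mn_le n (step n E eta alpha k x) b Hb').
  unfold step in *.
  assert (alpha k * Mn n x <= alpha k * nbr_min n E k a x) by (apply Rmult_le_compat_l; lra).
  assert ((1 - eta k - alpha k) * Mx n x <= (1 - eta k - alpha k) * nbr_max n E k a x)
    by (apply Rmult_le_compat_l; lra).
  assert (alpha k * nbr_min n E k b x <= alpha k * Mn n x) by (apply Rmult_le_compat_l; lra).
  assert ((1 - eta k - alpha k) * nbr_max n E k b x <= (1 - eta k - alpha k) * Mx n x)
    by (apply Rmult_le_compat_l; lra).
  rewrite HA in *. rewrite HB in *. nra.
Qed.

Lemma spread_nonneg n x : (1 <= n)%nat -> 0 <= spread n x.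
Proof. intro. unfold spread; fold (Mx n x); fold (Mn n x).
 pose proof (Mx_ge n x 0 ltac:(lia)); pose proof (Mn_le n x 0 ltac:(lia)); lra. Qed.

Lemma lower_bound n E (eta alpha : nat -> R) k0 x0
  (Hn : (3 <= n)%nat)
  (Heta : forall k, 0 < eta k <= 1)
  (Halpha : forall k, 0 <= alpha k <= 1 - eta k)
  (Hsum : exists l, Un_cv (fun N => sum_f_R0 (fun k => 1 - eta k) N) l)
  (Hx0 : exists i j, (i < n)%nat /\ (j < n)%nat /\ x0 i <> x0 j) :
  exists eps, eps > 0 /\ exists K1, forall K, (K1 <= K)%nat ->
        spread n (state n E eta alpha k0 x0 K) >= eps.
Proof.
  set (G m := spread n (traj n E eta alpha k0 x0 m)).
  assert (Gstep : forall m, G (S m) >= eta (k0 + m)%nat * G m).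
  { intro m. unfold G; simpl. apply step_spread; [lia|apply Heta|apply Halpha]. }
  assert (Gpos : forall m, G m > 0).
  { induction m.
    - destruct Hx0 as [i [j [Hi [Hj Hne]]]]. unfold G; simpl. unfold spread.
      fold (Mx n x0); fold (Mn n x0).
      pose proof (Mx_ge n x0 i Hi); pose proof (Mn_le n x0 i Hi);
      pose proof (Mx_ge n x0 j Hj); pose proof (Mn_le n x0 j Hj).
      destruct (Rlt_or_le (x0 i) (x0 j)); lra.
    - pose proof (Gstep m). pose proof (Heta (k0+m)%nat). nra. }
  destruct Hsum as [l Hl].
  destruct (Hl (1/4) ltac:(lra)) as [N HN].
  set (S := fun N => sum_f_R0 (fun k => 1 - eta k) N).
  assert (Hc : forall d, G (Datatypes.S N + d)%nat >=
     G (Datatypes.S N) * (1 - (S (k0 + N + d)%nat - S (k0 + N)%nat))).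
  { induction d.
    - rewrite !Nat.add_0_r, (Rminus_diag_eq _ _ eq_refl), Rminus_0_r, Rmult_1_r. lra.
    - pose proof (Gstep (Datatypes.S N + d)%nat).
      replace (Datatypes.S N + Datatypes.S d)%nat with (Datatypes.S (Datatypes.S N + d)) by lia.
      replace (k0 + (Datatypes.S N + d))%nat with (Datatypes.S (k0 + N + d)) in H by lia.
      replace (k0 + N + Datatypes.S d)%nat with (Datatypes.S (k0 + N + d)) by lia.
      unfold S at 1; simpl; fold (S (k0+N+d)%nat).
      set (c := 1 - eta (Datatypes.S (k0 + N + d))) in *.
      assert (0 <= c) by (unfold c; pose proof (Heta (Datatypes.S (k0 + N + d))); lra).
      assert (0 <= S (k0 + N + d)%nat - S (k0 + N)%nat).
      { clear -Heta. induction d. rewrite Nat.add_0_r; lra.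
        replace (k0 + N + Datatypes.S d)%nat with (Datatypes.S (k0 + N + d)) by lia.
        unfold S at 1; simpl; fold (S (k0+N+d)%nat).
        pose proof (Heta (Datatypes.S (k0 + N + d))). lra. }
      pose proof (Gpos (Datatypes.S N)). pose proof (Gpos (Datatypes.S N + d)%nat).
      replace (eta (Datatypes.S (k0 + N + d))) with (1 - c) in H by (unfold c; lra).
      set (T := S (k0 + N + d)%nat - S (k0 + N)%nat) in *.
      assert ((1-c) * G (Datatypes.S N + d)%nat >= (1-c) * (G (Datatypes.S N) * (1 - T))).
      { destruct (Rle_lt_dec c 1). apply Rle_ge, Rmult_le_compat_l; lra.
        pose proof (Heta (Datatypes.S (k0 + N + d))). unfold c in *. lra. }
      change (Datatypes.S (Datatypes.S (N + d))) with (Datatypes.S (Datatypes.S N + d)). assert (0 <= G (Datatypes.S N) * T * c) by (repeat apply Rmult_le_pos; lra). unfold T in *. nra. }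
  exists (G (Datatypes.S N) / 2). split. pose proof (Gpos (Datatypes.S N)); lra.
  exists (k0 + Datatypes.S N)%nat. intros K HK. unfold state.
  replace (K - k0)%nat with (Datatypes.S N + (K - k0 - Datatypes.S N))%nat by lia.
  fold (G (Datatypes.S N + (K - k0 - Datatypes.S N))%nat).
  set (d := (K - k0 - Datatypes.S N)%nat).
  pose proof (Hc d).
  pose proof (HN (k0 + N + d)%nat ltac:(lia)). pose proof (HN (k0 + N)%nat ltac:(lia)).
  unfold R_dist in *. fold (S (k0+N+d)%nat) in H0. fold (S (k0+N)%nat) in H1.
  apply Rabs_def2 in H0. apply Rabs_def2 in H1.
  pose proof (Gpos (Datatypes.S N)). nra.
Qed.

Lemma uniform (u : nat -> nat -> R) z eps : eps > 0 ->
  (forall i, (i < 0 + 0)%nat \/ True -> True) ->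
  forall m, (forall i, (i < m)%nat -> Un_cv (fun K => u K i) z) ->
  exists N, forall K, (N <= K)%nat -> forall i, (i < m)%nat -> Rabs (u K i - z) < eps.
Proof.
  intros He _ m. induction m; intro H.
  - exists 0%nat; intros; lia.
  - destruct IHm as [N1 HN1]. intros; apply H; lia.
    destruct (H m ltac:(lia) eps He) as [N2 HN2].
    exists (Nat.max N1 N2). intros K HK i Hi.
    destruct (Nat.eq_dec i m). subst. apply HN2. lia.
    apply HN1; lia.
Qed.

Theorem theorem2 (n : nat) (E : graph_seq) (eta alpha : nat -> R)
  (Hn : (3 <= n)%nat)
  (Hself : forall k i, (i < n)%nat -> E k i i = true)
  (Heta : forall k, 0 < eta k <= 1)
  (Halpha : forall k, 0 <= alpha k <= 1 - eta k)
  (Hsum : exists l, Un_cv (fun N => sum_f_R0 (fun k => 1 - eta k) N) l)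
  (k0 : nat) (x0 : nat -> R)
  (Hx0 : exists i j, (i < n)%nat /\ (j < n)%nat /\ x0 i <> x0 j) :
  ~ (exists z, forall i, (i < n)%nat ->
        Un_cv (fun K => state n E eta alpha k0 x0 K i) z)
  /\ (exists eps, eps > 0 /\ exists K1, forall K, (K1 <= K)%nat ->
        spread n (state n E eta alpha k0 x0 K) >= eps).
Proof.
  pose proof (lower_bound n E eta alpha k0 x0 Hn Heta Halpha Hsum Hx0) as LB.
  split; [|exact LB].
  intros [z Hz]. destruct LB as [eps [Heps [K1 HK1]]].
  destruct (uniform (fun K i => state n E eta alpha k0 x0 K i) z (eps/2)
     ltac:(lra) (fun _ _ => I) n Hz) as [N HN].
  set (K := Nat.max N K1).
  pose proof (HK1 K ltac:(lia)). set (x := state n E eta alpha k0 x0 K) in *.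
  unfold spread in H; fold (Mx n x) in H; fold (Mn n x) in H.
  destruct (Mx_att n x ltac:(lia)) as [a [Ha HA]]. destruct (Mn_att n x ltac:(lia)) as [b [Hb HB]].
  pose proof (HN K ltac:(lia) a Ha). pose proof (HN K ltac:(lia) b Hb).
  simpl in H0, H1. fold x in H0, H1.
  apply Rabs_def2 in H0. apply Rabs_def2 in H1. lra.
Qed.
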